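(* Consider the following two-player game with parameters $N\ge 1$ (number of bins), a positive integer $b\ge 1$, and thresholds $k>k'$. Initially there are $N$ bins, each containing at least $k$ balls. In each round, first Player I removes a bin of smallest size (number of balls) among the remaining bins, and then Player II removes balls from the remaining bins, at most $b$ balls in total in that round, distributed arbitrarily. Player II wins if at some moment some remaining bin contains at most $k'$ balls; Player I wins if all bins are removed before this happens. If $b<\frac{k-k'}{\ln N+1}$, then Player I wins against every strategy of Player II. *)

(* Defs.v *)
From Stdlib Require Import Reals List Arith.
Import ListNotations.

(* A game state is the list of sizes (numbers of balls) of the remaining bins. *)

(* One round of the game, from state [l] to state [l'']:
   - Player I removes a bin [x] of smallest size among the remaining bins
     (any such bin: l = l1 ++ x :: l2 with x <= every size in l);
   - Player II then removes balls from the remaining bins [l1 ++ l2]: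
     each bin can only lose balls (pointwise <=), and at most [b] balls
     are removed in total in this round. *)
Definition round (b : nat) (l l'' : list nat) : Prop :=
  exists (l1 : list nat) (x : nat) (l2 : list nat),
    l = l1 ++ x :: l2 /\
    Forall (fun y => x <= y) l /\
    Forall2 le l'' (l1 ++ l2) /\
    list_sum (l1 ++ l2) <= list_sum l'' + b.

(* Main.v *)
Require Import Defs.
From Stdlib Require Import Reals List Arith Lia Lra Psatz.
Import ListNotations.
Open Scope R_scope.

Inductive Sub : list nat -> list nat -> Prop :=
| Sub_nil : Sub [] []
| Sub_cons : forall x s l, Sub s l -> Sub (x::s) (x::l)
| Sub_skip : forall x s l, Sub s l -> Sub s (x::l).

Lemma Sub_in s l : Sub s l -> forall y, In y s -> In y l.
Proof. induction 1; simpl; intros y Hy; firstorder. Qed.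

Lemma Sub_len s l : Sub s l -> (length s <= length l)%nat.
Proof. induction 1; simpl; lia. Qed.

Lemma Sub_nil_any l : Sub [] l.
Proof. induction l; constructor; auto. Qed.

Lemma Sub_single y l : In y l -> Sub [y] l.
Proof.
  induction l as [|a l IH]; simpl; [tauto|].
  intros [->|H]. constructor; apply Sub_nil_any. apply Sub_skip; auto.
Qed.

Lemma Sub_forall2 a b : Forall2 le a b -> forall s, Sub s a ->
  exists s0, Sub s0 b /\ length s0 = length s /\
   (list_sum s0 + list_sum a <= list_sum s + list_sum b)%nat.
Proof.
  induction 1 as [|x y a' b' Hxy _ IH]; intros s Hs.
  - inversion Hs; subst. exists []; repeat split; try (constructor); simpl; try lia.
  - inversion Hs; subst.
    + destruct (IH _ H1) as [w0 [W0 [Hl Hs0]]].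
      exists (y::w0); repeat split; try (constructor; auto); simpl; try lia.
    + destruct (IH _ H1) as [w0 [W0 [Hl Hs0]]].
      exists w0; repeat split; try (apply Sub_skip; auto); simpl; try lia.
Qed.

Lemma Sub_insert l1 x l2 : forall u0, Sub u0 (l1++l2) ->
  exists u1, Sub u1 (l1 ++ x :: l2) /\ length u1 = S (length u0) /\
    list_sum u1 = (x + list_sum u0)%nat.
Proof.
  induction l1 as [|y l1 IH]; simpl; intros u0 Hs.
  - exists (x::u0); repeat split; constructor; auto.
  - inversion Hs; subst.
    + destruct (IH _ H1) as [u1 [H0 [Hl Hu1]]].
      exists (y::u1); repeat split; try (constructor; auto); simpl; try lia.
    + destruct (IH _ H1) as [u1 [H0 [Hl Hu1]]].
      exists u1; repeat split; try (apply Sub_skip; auto); simpl; try lia.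
Qed.

Lemma sum_ge x s : Forall (fun y => x <= y)%nat s -> (x * length s <= list_sum s)%nat.
Proof. induction 1; simpl; lia. Qed.

Definition Inv (c : nat -> R) (l : list nat) : Prop :=
  forall s, Sub s l -> INR (length s) * c (length s) <= INR (list_sum s).

Lemma step (b : nat) (c : nat -> R)
  (hc : forall j, (1 <= j)%nat -> c (S j) = c j + INR b / INR j) l l'' :
  round b l l'' -> Inv c l -> Inv c l''.
Proof.
  intros [l1 [x [l2 [-> [hF [hF2 hsum]]]]]] Hinv s hs.
  destruct (Sub_forall2 _ _ hF2 s hs) as [s0 [hs0 [hlen hS]]].
  destruct (Sub_insert l1 x l2 s0 hs0) as [s1 [hs1 [hl1 hsum1]]].
  pose proof (Hinv s1 hs1) as IH. rewrite hl1, hsum1 in IH.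
  assert (hx : (x * length s0 <= list_sum s0)%nat).
  { apply sum_ge. rewrite Forall_forall in hF |- *. intros y Hy.
    apply hF. apply Sub_in with (y:=y) in hs0; auto.
    apply in_app_or in hs0. apply in_or_app. simpl. tauto. }
  destruct (length s) as [|j] eqn:Ej.
  - simpl. rewrite Rmult_0_l. apply pos_INR.
  - rewrite hlen in *. rewrite hc in IH by lia.
    apply le_INR in hx. apply le_INR in hS. apply le_INR in hsum.
    rewrite mult_INR in hx. rewrite !plus_INR in hS, hsum, IH.
    rewrite S_INR in IH.
    set (J := INR (S j)) in *. set (C := c (S j)) in *.
    assert (HJ : 1 <= J). { unfold J. rewrite S_INR. pose proof (pos_INR j). lra. }
    assert (E : J * ((J + 1) * (C + INR b / J)) = (J+1) * (J*C + INR b)).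
    { field. lra. }
    assert (H1 : J * ((J + 1) * (C + INR b / J)) <= J * (INR x + INR (list_sum s0))).
    { apply Rmult_le_compat_l; lra. }
    assert (H2 : (J+1) * (J*C + INR b) <= (J+1) * INR (list_sum s0)) by nra.
    apply Rmult_le_reg_l in H2; [|lra]. rewrite ?plus_INR in hS. lra.
Qed.

Fixpoint H (n : nat) : R := match n with 0%nat => 0 | S m => H m + / INR (S m) end.

Lemma H_mono m n : (m <= n)%nat -> H m <= H n.
Proof.
  induction 1; [lra|]. cbn [H]. assert (0 < / INR (S m0)).
  { apply Rinv_0_lt_compat. apply lt_0_INR. lia. } lra.
Qed.

Lemma ln_le y : 0 < y -> ln y <= y - 1.
Proof. intros Hy. pose proof (exp_ineq1_le (ln y)). rewrite exp_ln in H0; lra. Qed.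

Lemma H_ln n : (1 <= n)%nat -> H n <= 1 + ln (INR n).
Proof.
  induction 1 as [|n Hn IH].
  - simpl. rewrite ln_1. lra.
  - change (H (S n)) with (H n + / INR (S n)).
    assert (Hp : 1 <= INR n) by (apply (le_INR 1); auto).
    assert (Hm : INR (S n) = INR n + 1) by apply S_INR.
    set (m := INR (S n)) in *.
    assert (L : ln (INR n * / m) <= INR n * / m - 1).
    { apply ln_le. apply Rmult_lt_0_compat; [lra|apply Rinv_0_lt_compat; lra]. }
    rewrite ln_mult, ln_Rinv in L; try apply Rinv_0_lt_compat; try lra.
    assert (E : INR n * / m - 1 = - / m).
    { rewrite Hm. field. lra. }
    lra.
Qed.

Theorem mainTheorem5 (N b k k' : nat) (hN : (1 <= N)%nat) (hb : (1 <= b)%nat)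
  (hk : (k' < k)%nat)
  (hbound : (INR b < (INR k - INR k') / (ln (INR N) + 1))%R)
  (st : nat -> list nat)
  (h0len : length (st 0%nat) = N)
  (h0 : Forall (fun x => k <= x)%nat (st 0%nat))
  (hplay : forall t : nat, (t < N)%nat -> round b (st t) (st (S t))) :
  forall t : nat, (t <= N)%nat -> Forall (fun x => k' < x)%nat (st t).
Proof.
  set (c := fun j => INR k - INR b * (H (N-1) - H (j-1))).
  assert (hc : forall j, (1 <= j)%nat -> c (S j) = c j + INR b / INR j).
  { intros j Hj. unfold c. destruct j as [|j]; [lia|].
    replace (S (S j) - 1)%nat with (S j) by lia.
    replace (S j - 1)%nat with j by lia. cbv beta. change (H (S j)) with (H j + / INR (S j)). field.
    apply not_0_INR. lia. }
  assert (Hinv : forall t, (t <= N)%nat -> Inv c (st t)).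
  { induction t as [|t IHt]; intros Ht.
    - intros s Hs. pose proof (Sub_len _ _ Hs) as Hl. rewrite h0len in Hl.
      assert (Hf : Forall (fun x => k <= x)%nat s).
      { rewrite Forall_forall in h0 |- *. intros y Hy. apply h0.
        eapply Sub_in; eauto. }
      apply sum_ge in Hf. apply le_INR in Hf. rewrite mult_INR in Hf.
      assert (c (length s) <= INR k).
      { unfold c. assert (H (length s - 1) <= H (N-1)) by (apply H_mono; lia).
        pose proof (pos_INR b). nra. }
      pose proof (pos_INR (length s)). nra.
    - apply (step b c hc (st t)); [apply hplay; lia | apply IHt; lia]. }
  intros t Ht. rewrite Forall_forall. intros y Hy.
  pose proof (Hinv t Ht [y] (Sub_single _ _ Hy)) as Hc.
  simpl in Hc. unfold c in Hc. simpl in Hc.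
  assert (HH : H (N-1) <= ln (INR N) + 1).
  { destruct (Nat.eq_dec N 1) as [->|Hne].
    - simpl. rewrite ln_1. lra.
    - pose proof (H_ln (N-1) ltac:(lia)).
      assert (ln (INR (N-1)) <= ln (INR N)).
      { apply Rlt_le, ln_increasing. apply lt_0_INR; lia. apply lt_INR; lia. }
      lra. }
  assert (Hln : 0 <= ln (INR N)).
  { destruct (Nat.eq_dec N 1) as [->|Hne]. simpl. rewrite ln_1; lra.
    left. rewrite <- ln_1. apply ln_increasing. lra. apply (lt_INR 1); lia. }
  apply Rmult_lt_compat_r with (r := ln (INR N) + 1) in hbound; [|lra].
  unfold Rdiv in hbound. rewrite Rmult_assoc, Rinv_l, Rmult_1_r in hbound by lra.
  assert (INR b * H (N-1) <= INR b * (ln (INR N) + 1)).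
  { apply Rmult_le_compat_l; [apply pos_INR|lra]. }
  apply INR_lt. rewrite Nat.add_0_r in Hc. lra.
Qed.
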